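(* Let $S,T$ be semirings, $G$ a $(T,S)$-bisemimodule, and let $0\to L\xrightarrow{f}M\xrightarrow{g}N$ be a sequence of left $T$-semimodules, with induced sequence of left $S$-semimodules $0\to\mathrm{Hom}_T(G,L)\xrightarrow{(G,f)}\mathrm{Hom}_T(G,M)\xrightarrow{(G,g)}\mathrm{Hom}_T(G,N)$, where $(G,f)(\varphi)=f\circ\varphi$ and $(G,g)(\psi)=g\circ\psi$. (1) If $0\to L\xrightarrow{f}M$ is exact (i.e. $f$ is injective) and $f$ is normal, then $0\to\mathrm{Hom}_T(G,L)\xrightarrow{(G,f)}\mathrm{Hom}_T(G,M)$ is exact (i.e. $(G,f)$ is injective) and $(G,f)$ is normal. (2) If $0\to L\xrightarrow{f}M\xrightarrow{g}N$ is semi-exact and $f$ is normal, then $0\to\mathrm{Hom}_T(G,L)\to\mathrm{Hom}_T(G,M)\to\mathrm{Hom}_T(G,N)$ is proper-exact (and hence semi-exact) and $(G,f)$ is normal. (3) If $0\to L\xrightarrow{f}M\xrightarrow{g}N$ is exact and $\mathrm{Hom}_T(G,-)$ preserves $k$-normal morphisms, then $0\to\mathrm{Hom}_T(G,L)\to\mathrm{Hom}_T(G,M)\to\mathrm{Hom}_T(G,N)$ is exact.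
   Context: A semiring $(S,+,0,\cdot,1)$ consists of a commutative monoid $(S,+,0)$ and a monoid $(S,\cdot,1)$ with $0\neq 1$, absorbing zero and both distributive laws; semimodules are as modules over rings without subtraction. $\mathrm{Hom}_T(G,X)$ is a left $S$-semimodule via pointwise addition and $(s\varphi)(x)=\varphi(xs)$. For a linear map $h:X\to Y$: $\mathrm{Ker}(h)=\{x\mid h(x)=0\}$; for $A\subseteq Y$, $\overline{A}=\{y\in Y\mid y+a=a'\text{ for some }a,a'\in A\}$; $h$ is $k$-normal if $h(x)=h(x')$ implies $x+k=x'+k'$ for some $k,k'\in\mathrm{Ker}(h)$; $h$ is $i$-normal if $h(X)=\overline{h(X)}$; $h$ is normal if both. A sequence $X\xrightarrow{u}Y\xrightarrow{v}Z$ is exact if $v$ is $k$-normal and $u(X)=\mathrm{Ker}(v)$; proper-exact if $u(X)=\mathrm{Ker}(v)$; semi-exact if $\overline{u(X)}=\mathrm{Ker}(v)$. A longer sequence is exact (resp. proper-exact, semi-exact) if each consecutive three-term piece is; a leading $0$ denotes the zero semimodule with the zero map. *)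

(* Defs.v *)
From HB Require Import structures.
From mathcomp Require Import all_boot all_order all_algebra.
Set Implicit Arguments. Unset Strict Implicit. Unset Printing Implicit Defensive.
Import GRing.Theory.
Local Open Scope ring_scope.

(* A commutative monoid presented by its carrier, zero and addition; used so that
   the notions below apply both to MathComp semimodules and to HomT-semimodules. *)
Record cmonoid := CMonoid { cm_car :> Type; cm_zero : cm_car;
                            cm_add : cm_car -> cm_car -> cm_car }.

Definition cm_of (V : nmodType) : cmonoid := @CMonoid V 0 +%R.

Section Notions.
Variables (X Y : cmonoid).
Definition Ker (h : X -> Y) (x : X) : Prop := h x = cm_zero Y.
Definition Im (h : X -> Y) (y : Y) : Prop := exists x, h x = y.
Definition cl (A : Y -> Prop) (y : Y) : Prop :=
  exists a a', A a /\ A a' /\ cm_add y a = a'.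
Definition k_normal (h : X -> Y) : Prop :=
  forall x x', h x = h x' ->
    exists k k', Ker h k /\ Ker h k' /\ cm_add x k = cm_add x' k'.
Definition i_normal (h : X -> Y) : Prop := forall y, Im h y <-> cl (Im h) y.
Definition normal (h : X -> Y) : Prop := k_normal h /\ i_normal h.
End Notions.

Section Exactness.
Variables (X Y Z : cmonoid).
Definition exact3 (u : X -> Y) (v : Y -> Z) : Prop :=
  k_normal v /\ forall y, Im u y <-> Ker v y.
Definition proper_exact3 (u : X -> Y) (v : Y -> Z) : Prop :=
  forall y, Im u y <-> Ker v y.
Definition semi_exact3 (u : X -> Y) (v : Y -> Z) : Prop :=
  forall y, cl (Im u) y <-> Ker v y.
End Exactness.

Definition cm_zero_obj : cmonoid := @CMonoid unit tt (fun _ _ => tt).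
Definition zmap (Y : cmonoid) : cm_zero_obj -> Y := fun _ => cm_zero Y.

Definition right_bisemimod (T S : nzSemiRingType) (G : lSemiModType T)
  (ract : G -> S -> G) : Prop :=
  (forall x y s, ract (x + y) s = ract x s + ract y s) /\
  (forall x s s', ract x (s + s') = ract x s + ract x s') /\
  (forall x s s', ract x (s * s') = ract (ract x s) s') /\
  (forall x, ract x 1 = x) /\
  (forall x, ract x 0 = 0) /\ (forall s, ract 0 s = 0) /\
  (forall (t : T) x s, ract (t *: x) s = t *: ract x s).

Definition is_Tlinear (T : nzSemiRingType) (G X : lSemiModType T) (phi : G -> X)
  : Prop :=
  [/\ phi 0 = 0, forall x y, phi (x + y) = phi x + phi y
    & forall (t : T) x, phi (t *: x) = t *: phi x].

Definition homT (T : nzSemiRingType) (G X : lSemiModType T) : Type :=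
  {phi : G -> X | is_Tlinear phi}.

Section HomOps.
Variables (T : nzSemiRingType) (G X : lSemiModType T).
Lemma hom0_lin : is_Tlinear (fun _ : G => (0 : X)).
Proof. by split=> [|x y|t x]; rewrite ?addr0 ?scaler0. Qed.
Definition hom0 : homT G X := exist _ _ hom0_lin.
Lemma homadd_lin (p q : homT G X) :
  is_Tlinear (fun x => proj1_sig p x + proj1_sig q x).
Proof.
case: p q => [p [p0 pD pZ]] [q [q0 qD qZ]] /=; split=> [|x y|t x].
- by rewrite p0 q0 addr0.
- by rewrite pD qD addrACA.
- by rewrite pZ qZ scalerDr.
Qed.
Definition homadd (p q : homT G X) : homT G X := exist _ _ (homadd_lin p q).
(* Hom_T(G,X) with pointwise addition (its left S-action plays no role in the
   additive notions Ker, closure, normality, exactness). *)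
Definition HomT : cmonoid := @CMonoid (homT G X) hom0 homadd.
End HomOps.

Section HomMap.
Variables (T : nzSemiRingType) (G X Y : lSemiModType T) (f : {linear X -> Y}).
Lemma homcomp_lin (p : homT G X) : is_Tlinear (fun x => f (proj1_sig p x)).
Proof.
case: p => [p [p0 pD pZ]] /=; split=> [|x y|t x].
- by rewrite p0 raddf0.
- by rewrite pD raddfD.
- by rewrite pZ linearZ.
Qed.
Definition HomMap : HomT G X -> HomT G Y := fun p => exist _ _ (homcomp_lin p).
End HomMap.
Arguments HomMap {T} G {X Y} f.
Arguments HomT {T} G X.

(* Main.v *)
Require Import Defs.
From mathcomp Require Import all_boot all_order all_algebra.
From Stdlib Require Import FunctionalExtensionality ProofIrrelevance ClassicalEpsilon.
Import GRing.Theory.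
Local Open Scope ring_scope.

Section Aux.
Variables (T : nzSemiRingType) (G : lSemiModType T).

Lemma homT_eq (X : lSemiModType T) (p q : homT G X) :
  (forall x, proj1_sig p x = proj1_sig q x) -> p = q.
Proof.
case: p q => [p Hp] [q Hq] /= E.
have E' : p = q by apply: functional_extensionality.
subst q. by rewrite (proof_irrelevance _ Hp Hq).
Qed.

Variables (L M : lSemiModType T) (f : {linear L -> M}).

Lemma HomMapE (p : homT G L) x : proj1_sig (HomMap G f p) x = f (proj1_sig p x).
Proof. by []. Qed.

Lemma lift_hom (inj : injective f) (psi : homT G M)
  (H : forall x, exists l, f l = proj1_sig psi x) :
  exists phi : homT G L, HomMap G f phi = psi.
Proof.
have [phi Ephi] : exists phi : G -> L, forall x, f (phi x) = proj1_sig psi x.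
  exists (fun x => proj1_sig (constructive_indefinite_description _ (H x))).
  by move=> x; case: (constructive_indefinite_description _ _).
clear H; case: psi Ephi => [ps [p0 pD pZ]] /= Ephi.
have lin : is_Tlinear phi.
  split=> [|x y|t x]; apply: inj.
  - by rewrite Ephi p0 raddf0.
  - by rewrite raddfD; apply: etrans (Ephi (x+y)) _; rewrite pD -!Ephi.
  - by rewrite linearZZ; apply: etrans (Ephi _) _; rewrite pZ -!Ephi.
exists (exist _ phi lin). by apply: homT_eq => x /=; rewrite Ephi.
Qed.

Lemma hom_inj_k (inj : injective f) : k_normal (HomMap G f).
Proof.
move=> p q E; exists (hom0 G L), (hom0 G L); split; [|split].
- by apply: homT_eq => x /=; rewrite raddf0.
- by apply: homT_eq => x /=; rewrite raddf0.
- apply: homT_eq => x /=; rewrite !addr0; apply: inj.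
  by rewrite -!HomMapE E.
Qed.

Lemma hom_inj_exact (inj : injective f) :
  exact3 (zmap (HomT G L)) (HomMap G f).
Proof.
split; first exact: hom_inj_k.
move=> y; split.
- move=> [u <-]; apply: homT_eq => x /=; by rewrite raddf0.
- move=> Hy; exists tt; apply: homT_eq => x /=; apply: inj.
  rewrite raddf0 -HomMapE; by rewrite /Ker in Hy; rewrite Hy.
Qed.

Lemma hom_inj_normal (inj : injective f) (Hi : i_normal (f : cm_of L -> cm_of M)) :
  normal (HomMap G f).
Proof.
split; first exact: hom_inj_k.
move=> psi; split.
- move=> Hpsi; exists (HomMap G f (hom0 G L)), psi; split; [by eexists|split=>//].
  by apply: homT_eq => x /=; rewrite raddf0 addr0.
- move=> [a [a' [[pa Ea] [[pa' Ea'] E]]]].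
  apply: lift_hom => // x; apply/(Hi (proj1_sig psi x)).
  exists (f (proj1_sig pa x)), (f (proj1_sig pa' x)); split; [by eexists|split; [by eexists|]].
  have := f_equal (fun h : homT G M => proj1_sig h x) E => /=.
  by rewrite -Ea -Ea'.
Qed.
End Aux.

Lemma inj_of (T : nzSemiRingType) (L M : lSemiModType T) (f : {linear L -> M}) :
  k_normal (f : cm_of L -> cm_of M) -> (forall y : L, f y = 0 -> y = 0) ->
  injective f.
Proof.
move=> Hk H0 x x' E; have [k [k' [Hk1 [Hk2 Ek]]]] := Hk x x' E.
move: Ek; rewrite /= (H0 _ Hk1) (H0 _ Hk2) !addr0 //.
Qed.

Theorem mainTheorem5 (S T : nzSemiRingType) (G : lSemiModType T)
  (ract : G -> S -> G) (HG : right_bisemimod ract)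
  (L M N : lSemiModType T) (f : {linear L -> M}) (g : {linear M -> N}) :
  (* (1) *)
  ((exact3 (zmap (cm_of L)) (f : cm_of L -> cm_of M) /\
    normal (f : cm_of L -> cm_of M)) ->
   exact3 (zmap (HomT G L)) (HomMap G f) /\ normal (HomMap G f)) /\
  (* (2) *)
  ((semi_exact3 (zmap (cm_of L)) (f : cm_of L -> cm_of M) /\
    semi_exact3 (f : cm_of L -> cm_of M) (g : cm_of M -> cm_of N) /\
    normal (f : cm_of L -> cm_of M)) ->
   (proper_exact3 (zmap (HomT G L)) (HomMap G f) /\
    proper_exact3 (HomMap G f) (HomMap G g)) /\ normal (HomMap G f)) /\
  (* (3) *)
  ((exact3 (zmap (cm_of L)) (f : cm_of L -> cm_of M) /\
    exact3 (f : cm_of L -> cm_of M) (g : cm_of M -> cm_of N) /\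
    (forall (X Y : lSemiModType T) (h : {linear X -> Y}),
       k_normal (h : cm_of X -> cm_of Y) -> k_normal (HomMap G h))) ->
   exact3 (zmap (HomT G L)) (HomMap G f) /\ exact3 (HomMap G f) (HomMap G g)).
Proof.
split; [|split].
- move=> [[Hk Hz] [Hk' Hi]].
  have inj : injective f.
    apply: inj_of => // y Hy; have [u <-] := (proj2 (Hz y) Hy); by [].
  split; [exact: hom_inj_exact | exact: hom_inj_normal].
- move=> [Hz [Hfg [Hk Hi]]].
  have inj : injective f.
    apply: inj_of => // y Hy; have [a [a' [[u <-] [[u' <-] E]]]] := proj2 (Hz y) Hy.
    by move: E => /= /eqP; rewrite addr0 => /eqP.
  split; last exact: hom_inj_normal.
  split; first by move=> y; have [_ H] := @hom_inj_exact T G L M f inj; exact: H.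
  move=> psi; split.
  + move=> [phi <-]; apply: homT_eq => x /=; apply/(Hfg (f _)).
    exists (f 0), (f (proj1_sig phi x)); split; [by eexists|split; [by eexists|]].
    by rewrite /= raddf0 addr0.
  + move=> Hpsi; apply: lift_hom => // x; apply/(Hi (proj1_sig psi x)).
    apply/(Hfg (proj1_sig psi x)).
    have := f_equal (fun h : homT G N => proj1_sig h x) Hpsi => /=.
    by rewrite /Ker /=.
- move=> [[Hk Hz] [[Hkg Hfg] HH]].
  have inj : injective f.
    apply: inj_of => // y Hy; have [u <-] := (proj2 (Hz y) Hy); by [].
  split; first exact: hom_inj_exact.
  split; first exact: HH.
  move=> psi; split.
  + move=> [phi <-]; apply: homT_eq => x /=; apply/(Hfg (f _)); by eexists.
  + move=> Hpsi; apply: lift_hom => // x; apply/(Hfg (proj1_sig psi x)).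
    have := f_equal (fun h : homT G N => proj1_sig h x) Hpsi => /=.
    by rewrite /Ker /=.
Qed.
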